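(* For an integer $k\ge1$, let $T_k$ be a complete ternary tree of height $k-1$ with root $r_k$ (so for $k=1$, $T_k$ is the single vertex $r_k$, which is also its unique leaf), and let $G_k^*$ be the multigraph obtained from $T_k$ by adding a new vertex $a_k$, one edge $a_kr_k$, and three parallel edges between $a_k$ and each leaf of $T_k$. Then $\mathrm{pw}(G_k^* )\ge k$ for every $k\ge 1$.
   Context: The height of a rooted tree is the maximum number of edges on a root-to-leaf path; a complete ternary tree of height $h$ is the rooted tree in which every non-leaf vertex has exactly three children and all leaves are at distance $h$ from the root. A path-decomposition of a multigraph $H$ is a sequence $(X_0,\dots,X_s)$ of subsets of $V(H)$ such that for each vertex $v$ the indices $i$ with $v\in X_i$ form a non-empty interval, and each edge has both ends in some $X_i$; its width is $\max_i|X_i|-1$, and the pathwidth $\mathrm{pw}(H)$ is the minimum width of a path-decomposition. *)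

(* Defs.v *)
From HB Require Import structures.
From mathcomp Require Import all_boot.
Set Implicit Arguments. Unset Strict Implicit. Unset Printing Implicit Defensive.

(* A finite multigraph: a finite vertex type V together with a list of edges
   (pairs of endpoints); repeated entries in the list are parallel edges. *)

Definition is_path_decomposition (V : finType) (E : seq (V * V))
    (X : seq {set V}) : Prop :=
  [/\ 0 < size X,
      (forall v : V, exists2 i, i < size X & v \in nth set0 X i),
      (forall (v : V) (i j l : nat), i <= j -> j <= l -> l < size X ->
          v \in nth set0 X i -> v \in nth set0 X l -> v \in nth set0 X j) &
      (forall e, e \in E -> exists2 i, i < size X &
          (e.1 \in nth set0 X i) && (e.2 \in nth set0 X i))].

Definition pd_width (V : finType) (X : seq {set V}) : nat :=
  (\max_(B <- X) #|B|) - 1.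

Definition pw_ge (V : finType) (E : seq (V * V)) (k : nat) : Prop :=
  forall X : seq {set V}, is_path_decomposition E X -> k <= pd_width X.

(* Vertices of the complete ternary tree T_k of height k-1: words over
   {0,1,2} of length n < k (a depth and a word of that length).  The root is
   the empty word, the children of w are w++[c] for c in {0,1,2}, and the
   leaves are the words of length k-1. *)
Definition Wd (k : nat) (n : 'I_k) : finType :=
  Finite.clone ((nat_of_ord n).-tuple 'I_3) _.
Definition TV (k : nat) : finType := {n : 'I_k & @Wd k n}.

Definition word k (w : TV k) : seq 'I_3 := val (tagged w).
Definition depth k (w : TV k) : nat := tag w.

Definition is_child k (w c : TV k) : bool :=
  [exists x : 'I_3, word c == rcons (word w) x].

(* Vertices of G_k^* : None is the new vertex a_k, Some w the tree vertex w *)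
Definition GV (k : nat) := option (TV k).

Definition Gstar_edges (k : nat) : seq (GV k * GV k) :=
  [seq (Some p.1, Some p.2) | p <- [seq (w, c) | w <- enum (TV k), c <- enum (TV k)]
                             & is_child p.1 p.2]
  ++ [seq (None, Some w) | w <- enum (TV k) & depth w == 0]
  ++ flatten [seq nseq 3 (None, Some w) | w <- enum (TV k) & (depth w).+1 == k].

(* Main.v *)
Require Import Defs.
From mathcomp Require Import all_boot zify.

Lemma node_ex K (s : seq 'I_3) (H : size s < K) : exists u : TV K, word u = s.
Proof. exists (@existT _ (fun n : 'I_K => Wd n) (Ordinal H) (in_tuple s : Wd (Ordinal H))). by []. Qed.

Lemma word_inj K : injective (@word K).
Proof. move=> [n w] [n' w']; rewrite /word /=. move=> E.
have En : n = n'. apply: val_inj => /=. by rewrite -(size_tuple w) -(size_tuple w') E.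
subst n'. congr existT. by apply: val_inj. Qed.

Lemma size_word K (u : TV K) : size (word u) = depth u.
Proof. by case: u => n w; rewrite /word /depth /= size_tuple. Qed.

Lemma size_word_lt K (u : TV K) : size (word u) < K.
Proof. by rewrite size_word /depth; case: u => n w /=. Qed.

Lemma edge_tree K (w c : TV K) x : word c = rcons (word w) x ->
  (Some w, Some c) \in Gstar_edges K.
Proof.
move=> E; rewrite /Gstar_edges !mem_cat; apply/orP; left.
apply/mapP; exists (w, c) => //; rewrite mem_filter /is_child /=.
apply/andP; split; first by apply/existsP; exists x; rewrite E.
by apply/allpairsP; exists (w, c); rewrite !mem_enum.
Qed.

Lemma edge_root K (u : TV K) : word u = [::] -> (None, Some u) \in Gstar_edges K.
Proof.
move=> E; rewrite /Gstar_edges !mem_cat; apply/orP; right; apply/orP; left.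
apply/mapP; exists u => //; rewrite mem_filter mem_enum -size_word E andbT //.
Qed.

Lemma edge_leaf K (u : TV K) : (size (word u)).+1 = K -> (None, Some u) \in Gstar_edges K.
Proof.
move=> E; rewrite /Gstar_edges !mem_cat; apply/orP; right; apply/orP; right.
apply/flattenP; exists (nseq 3 (None, Some u)); last by rewrite in_cons eqxx.
apply/mapP; exists u => //; rewrite mem_filter mem_enum -size_word E eqxx //.
Qed.
Set Implicit Arguments. Unset Strict Implicit.

Section Cvx.
Variables (V : finType) (X : seq {set V}).
Definition meets j (S : {set V}) := nth set0 X j :&: S != set0.
Definition cvx (S : {set V}) := forall i j l, i <= j -> j <= l ->
  meets i S -> meets l S -> meets j S.

Lemma meetsU j (S T : {set V}) : meets j (S :|: T) = meets j S || meets j T.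
Proof. by rewrite /meets setIUr -negb_and setU_eq0. Qed.

Lemma meetsP j (S : {set V}) : reflect (exists2 x, x \in nth set0 X j & x \in S) (meets j S).
Proof.
apply: (iffP (set0Pn _)) => [[x]|[x H1 H2]]; last by exists x; rewrite inE H1 H2.
by rewrite inE => /andP[H1 H2]; exists x.
Qed.

Lemma meetsS j (S T : {set V}) : S \subset T -> meets j S -> meets j T.
Proof. move=> /subsetP ST /meetsP[x H1 H2]; apply/meetsP; exists x => //; exact: ST. Qed.

Lemma cvxU (S T : {set V}) : cvx S -> cvx T -> (exists c, meets c S && meets c T) -> cvx (S :|: T).
Proof.
move=> cS cT [c /andP[cS' cT']] i j l ij jl; rewrite !meetsU.
move=> /orP[iS|iT] /orP[lS|lT].
- by rewrite (cS i j l).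
- case: (leqP j c) => jc; first by rewrite (cS i j c).
  by rewrite (cT c j l) ?orbT // ltnW.
- case: (leqP j c) => jc; first by rewrite (cT i j c) ?orbT.
  by rewrite (cS c j l) // ltnW.
- by rewrite (cT i j l) ?orbT.
Qed.

Lemma cvx_eq (S T : {set V}) : S = T -> cvx S -> cvx T. Proof. by move=> ->. Qed.
End Cvx.

Lemma med3 (f : 'I_3 -> nat) : exists p q r, [/\ p != q, q != r, p != r, f p <= f q & f q <= f r].
Proof.
pose a : 'I_3 := @Ordinal 3 0 isT. pose b : 'I_3 := @Ordinal 3 1 isT.
pose c : 'I_3 := @Ordinal 3 2 isT.
case: (leqP (f a) (f b)); case: (leqP (f b) (f c)); case: (leqP (f a) (f c)) => H1 H2 H3;
first [ by exists a, b, c; split=> //; lia | by exists a, c, b; split=> //; lia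
      | by exists b, a, c; split=> //; lia | by exists b, c, a; split=> //; lia
      | by exists c, a, b; split=> //; lia | by exists c, b, a; split=> //; lia ].
Qed.

Lemma meets1 (V : finType) (X : seq {set V}) j v : meets X j [set v] = (v \in nth set0 X j).
Proof.
apply/meetsP/idP => [[x H /[!inE] /eqP <-] //|H]; by exists v; rewrite ?inE.
Qed.

Lemma card_lt1 (V : finType) (B C : {set V}) y : B \subset C -> y \in C -> y \notin B -> #|B| < #|C|.
Proof.
move=> BC yC yB; have := subset_leq_card (_ : y |: B \subset C).
by rewrite cardsU1 yB; apply; rewrite subUset sub1set yC BC.
Qed.

Lemma card_lt2 (V : finType) (B C : {set V}) y z : B \subset C -> y \in C -> y \notin B ->
  z \in C -> z \notin B -> y != z -> #|B|.+1 < #|C|.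
Proof.
move=> BC yC yB zC zB yz; have := subset_leq_card (_ : y |: (z |: B) \subset C).
rewrite cardsU1 cardsU1 zB !inE (negbTE yz) (negbTE yB) /=; apply.
by rewrite !subUset !sub1set yC zC BC.
Qed.
Set Implicit Arguments. Unset Strict Implicit.

Section Main.
Variables (K : nat) (X : seq {set GV K}).
Hypothesis HX : is_path_decomposition (Gstar_edges K) X.

Definition Sub (s : seq 'I_3) : {set GV K} :=
  [set x | if x is Some u then prefix s (word u) else false].

Lemma inSub s u : (Some u \in Sub s) = prefix s (word u).
Proof. by rewrite inE. Qed.
Lemma notNoneSub s : (None \in Sub s) = false.
Proof. by rewrite inE. Qed.

Lemma bag_edge e : e \in Gstar_edges K -> exists j, meets X j [set e.1] && meets X j [set e.2].
Proof.
case: HX => _ _ _ H /H [j _ /andP[H1 H2]]; exists j.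
by apply/andP; split; apply/meetsP; [exists e.1 | exists e.2]; rewrite ?inE.
Qed.

Lemma cvx1 v : cvx X [set v].
Proof.
case: HX => _ _ H _ i j l ij jl /meetsP[x xi] /[!inE] /eqP Ex /meetsP[y yl] /[!inE] /eqP Ey; subst x y.
apply/meetsP; exists v; rewrite ?inE //; apply: (H v i j l) => //.
case: (ltnP l (size X)) => // /(nth_default set0) E; by rewrite E inE in yl.
Qed.

Lemma child_bag s u x : word u = s -> size s < K.-1 ->
  exists j, meets X j [set Some u] && meets X j (Sub (rcons s x)).
Proof.
move=> Hu Hs; have [c Hc] : exists c : TV K, word c = rcons s x.
  by apply: node_ex; rewrite size_rcons; lia.
have [j /andP[H1 H2]] := bag_edge (@edge_tree K u c x (etrans Hc (congr1 (rcons^~x) (esym Hu)))).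
exists j; rewrite H1 /=; apply: meetsS H2; apply/subsetP => y; rewrite inE => /eqP->.
by rewrite inSub Hc prefix_refl.
Qed.

Definition ia : 'I_3 := @Ordinal 3 0 isT.
Definition ib : 'I_3 := @Ordinal 3 1 isT.
Definition ic : 'I_3 := @Ordinal 3 2 isT.
Lemma I3_cases (x : 'I_3) : [\/ x = ia, x = ib | x = ic].
Proof. by case: x => [[|[|[|]]]] // H; [constructor 1|constructor 2|constructor 3]; apply: val_inj. Qed.

Lemma Sub_leaf s u : word u = s -> (size s).+1 = K -> Sub s = [set Some u].
Proof.
move=> Hu Hs; apply/setP => [[v|]]; rewrite !inE //.
apply/idP/idP => [Hp|/eqP[->]]; last by rewrite Hu prefix_refl.
apply/eqP; congr Some; apply: word_inj; rewrite Hu.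
have := @size_word_lt K v; have := size_prefix Hp => h1 h2.
move: Hp; rewrite prefixE => /eqP <-; rewrite take_oversize // -ltnS Hs; exact: h2.
Qed.

Lemma Sub_split s u : word u = s -> size s < K.-1 ->
  Sub s = [set Some u] :|: Sub (rcons s ia) :|: Sub (rcons s ib) :|: Sub (rcons s ic).
Proof.
move=> Hu Hs; apply/setP => [[v|]]; rewrite !inE //.
apply/idP/idP => [Hp|].
  case: (prefixP Hp) => t Et; case: t Et => [|y t] Et.
    by rewrite cats0 in Et; rewrite -Hu in Et; rewrite (@word_inj K _ _ Et) eqxx.
  have Hy : prefix (rcons s y) (word v) by apply/prefixP; exists t; rewrite cat_rcons.
  by case: (I3_cases y) => Ey; rewrite Ey in Hy; rewrite Hy ?orbT.
have H x : prefix (rcons s x) (word v) -> prefix s (word v).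
  by apply: prefix_trans; apply: prefix_rcons.
by move=> /orP[/orP[/orP[/eqP[->]|/H//]|/H//]|/H//]; rewrite Hu prefix_refl.
Qed.

Lemma SubS s x y : y \in Sub (rcons s x) -> y \in Sub s.
Proof. case: y => [v|]; rewrite ?inSub ?notNoneSub // => H; apply: prefix_trans H; apply: prefix_rcons. Qed.

Lemma Sub_disj s x x' y : x != x' -> y \in Sub (rcons s x) -> y \in Sub (rcons s x') -> False.
Proof.
case: y => [v|]; rewrite ?inSub ?notNoneSub // => xx'.
rewrite !prefixE !size_rcons => /eqP-> /eqP /rcons_inj [E].
by rewrite E eqxx in xx'.
Qed.

Lemma uSub s u x : word u = s -> Some u \in Sub (rcons s x) -> False.
Proof. by move=> Hu; rewrite inSub Hu => /size_prefix; rewrite size_rcons ltnn. Qed.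

Lemma cvx_Sub m s : size s + m.+1 = K -> cvx X (Sub s).
Proof.
elim: m s => [|m IH] s Hs.
  have [u Hu] : exists u : TV K, word u = s by apply: node_ex; lia.
  rewrite (Sub_leaf Hu); [exact: cvx1 | lia].
have [u Hu] : exists u : TV K, word u = s by apply: node_ex; lia.
have Hs' : size s < K.-1 by lia.
have IHx x : cvx X (Sub (rcons s x)) by apply: IH; rewrite size_rcons; lia.
have com x (T : {set GV K}) : [set Some u] \subset T ->
    exists c, meets X c T && meets X c (Sub (rcons s x)).
  move=> sT; have [j /andP[H1 H2]] := child_bag x Hu Hs'.
  by exists j; rewrite H2 andbT; apply: meetsS H1.
rewrite (Sub_split Hu Hs').
apply: cvxU; [apply: cvxU; [apply: cvxU; [exact: cvx1 | exact: IHx | apply: com]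
  | exact: IHx | apply: com] | exact: IHx | apply: com].
- exact: subxx.
- exact: subsetUl.
- by rewrite -!setUA subsetUl.
Qed.

Definition Pgood m s (A : {set GV K}) j :=
  (m < #|nth set0 X j :&: Sub s|) || ((m <= #|nth set0 X j :&: Sub s|) && meets X j A).

Lemma main m : 0 < m -> forall s, size s + m = K -> forall A : {set GV K},
  A :&: Sub s = set0 -> cvx X A ->
  (forall v, prefix s (word v) -> (size (word v)).+1 = K ->
     exists j, (Some v \in nth set0 X j) && meets X j A) ->
  (forall u, word u = s -> exists j, (Some u \in nth set0 X j) && meets X j A) ->
  exists j, Pgood m s A j.
Proof.
elim: m => [//|m IH] _ s Hs A HA cA Hleaf Hroot.
have [u Hu] : exists u : TV K, word u = s by apply: node_ex; lia.
case: m IH Hs => [|m] IH Hs.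
  have [j /andP[H1 H2]] := Hroot u Hu; exists j; apply/orP; right; rewrite H2 andbT.
  by apply/card_gt0P; exists (Some u); rewrite inE H1 inSub Hu prefix_refl.
have Hs' : size s < K.-1 by lia.
have HAS y : y \in A -> y \in Sub s -> False.
  by move=> yA yS; have := in_set0 y; rewrite -HA in_setI yA yS.
set A' := A :|: [set Some u].
have leafx x : exists j, meets X j (Sub (rcons s x)) && meets X j A.
  pose l := rcons s x ++ nseq (K.-1 - (size s).+1) ia.
  have [v Hv] : exists v : TV K, word v = l by apply: node_ex; rewrite size_cat size_rcons size_nseq; lia.
  have pv : prefix (rcons s x) (word v) by rewrite Hv prefix_prefix.
  have [|j /andP[H1 H2]] := Hleaf v (prefix_trans (prefix_rcons s x) pv).
    by rewrite Hv size_cat size_rcons size_nseq; lia.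
  by exists j; rewrite H2 andbT; apply/meetsP; exists (Some v); rewrite ?inSub.
have HIH x : exists j, Pgood m.+1 (rcons s x) A' j.
  apply: IH => //.
  - by rewrite size_rcons; lia.
  - apply/setP => y; rewrite in_set0 in_setI in_setU in_set1.
    apply/negbTE/negP => /andP[/orP[yA|/eqP->] yS].
      exact: (HAS y yA (SubS yS)).
    exact: (uSub Hu yS).
  - apply: cvxU => //; first exact: cvx1.
    have [j /andP[H1 H2]] := Hroot u Hu; exists j; rewrite H2 /= meets1 //.
  - move=> v pv Hv; have [j /andP[H1 H2]] := Hleaf v (prefix_trans (prefix_rcons s x) pv) Hv.
    by exists j; rewrite H1 /=; apply: meetsS H2; apply: subsetUl.
  - move=> c Hc.
    have [j /andP[H1 H2]] := bag_edge (@edge_tree K u c x (etrans Hc (congr1 (rcons^~x) (esym Hu)))).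
    exists j; rewrite -meets1 H2 /=; apply: meetsS H1; apply: subsetUr.
have [J HJ] := fin_all_exists HIH.
have [p [q [r [pq qr pr Jpq Jqr]]]] := med3 J.
have nonempty x : meets X (J x) (Sub (rcons s x)).
  move: (HJ x); rewrite /Pgood /meets -card_gt0 => /orP[H|/andP[H _]]; rewrite -card_gt0; exact: leq_trans H.
have cvxS x : cvx X (Sub (rcons s x)) by apply: (@cvx_Sub m); rewrite size_rcons; lia.
set B := nth set0 X (J q).
have meetC' : meets X (J q) ((Sub (rcons s p) :|: [set Some u]) :|: Sub (rcons s r)).
  have cC : cvx X ((Sub (rcons s p) :|: [set Some u]) :|: Sub (rcons s r)).
    apply: cvxU; [apply: cvxU; [exact: cvxS | exact: cvx1 | ] | exact: cvxS | ].
    + have [j /andP[H1 H2]] := child_bag p Hu Hs'; by exists j; rewrite H1 H2.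
    + have [j /andP[H1 H2]] := child_bag r Hu Hs'; exists j; rewrite H2 andbT.
      by rewrite meetsU H1 orbT.
  apply: (cC (J p) _ (J r)) => //.
    by rewrite !meetsU nonempty.
  by rewrite meetsU nonempty orbT.
have meetC'' : meets X (J q) ((Sub (rcons s p) :|: A) :|: Sub (rcons s r)).
  have cC : cvx X ((Sub (rcons s p) :|: A) :|: Sub (rcons s r)).
    apply: cvxU; [apply: cvxU; [exact: cvxS | exact: cA | ] | exact: cvxS | ].
    + have [j /andP[H1 H2]] := leafx p; by exists j; rewrite H1 H2.
    + have [j /andP[H1 H2]] := leafx r; exists j; rewrite H1 andbT.
      by rewrite meetsU H2 orbT.
  apply: (cC (J p) _ (J r)) => //.
    by rewrite !meetsU nonempty.
  by rewrite meetsU nonempty orbT.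
have sub : B :&: Sub (rcons s q) \subset B :&: Sub s.
  by apply/subsetP => y; rewrite !in_setI => /andP[-> /SubS ->].
have outq y x : x != q -> y \in Sub (rcons s x) -> y \notin B :&: Sub (rcons s q).
  by move=> xq yS; rewrite in_setI negb_and; apply/orP; right; apply/negP; apply: Sub_disj yS.
have uout : Some u \notin B :&: Sub (rcons s q).
  by rewrite in_setI negb_and; apply/orP; right; apply/negP; apply: uSub Hu.
have uin : Some u \in Sub s by rewrite inSub Hu prefix_refl.
have/meetsP [y yB yC] := meetC'.
have yS : y \in B :&: Sub s.
  rewrite in_setI yB; move: yC; rewrite !in_setU in_set1 => /orP[/orP[/SubS//|/eqP->//]|/SubS//].
have yq : y \notin B :&: Sub (rcons s q).
  move: yC; rewrite !in_setU in_set1 => /orP[/orP[|/eqP->//]|]; apply: outq => //.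
    by rewrite eq_sym.
have lt1 := card_lt1 sub yS yq.
have HJq := HJ q; rewrite /Pgood -/B in HJq.
exists (J q); rewrite /Pgood -/B.
case/orP: HJq => [H|/andP[H]].
  by rewrite (leq_ltn_trans H lt1).
rewrite meetsU => /orP[HmA|].
  by apply/orP; right; rewrite HmA andbT (leq_ltn_trans H lt1).
rewrite meets1 => uB.
have uS : Some u \in B :&: Sub s by rewrite in_setI uB uin.
have/meetsP [z zB zC] := meetC''.
move: zC; rewrite !in_setU => /orP[/orP[zp|zA]|zr].
- have zS : z \in B :&: Sub s by rewrite in_setI zB (SubS zp).
  have zu : z != Some u by apply/eqP => E; rewrite E in zp; exact: (uSub Hu zp).
  have := card_lt2 sub zS (outq _ _ pq zp) uS uout zu.
  by move=> H2; apply/orP; left; apply: leq_ltn_trans H2; exact: H.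
- have lt := card_lt1 sub uS uout.
  apply/orP; right; rewrite (leq_ltn_trans H lt) /=; apply/meetsP; by exists z.
- have rq : r != q by rewrite eq_sym.
  have zS : z \in B :&: Sub s by rewrite in_setI zB (SubS zr).
  have zu : z != Some u by apply/eqP => E; rewrite E in zr; exact: (uSub Hu zr).
  have := card_lt2 sub zS (outq _ _ rq zr) uS uout zu.
  by move=> H2; apply/orP; left; apply: leq_ltn_trans H2; exact: H.
Qed.

Lemma final : 0 < K -> K <= pd_width X.
Proof.
move=> K0.
have [||||j Hj] := @main K K0 [::] (add0n K) [set None].
- apply/setP => y; rewrite in_set0 in_setI in_set1; apply/negbTE/negP => /andP[/eqP-> ].
  by rewrite notNoneSub.
- exact: cvx1.
- move=> v _ Hv; have [j /andP[H1 H2]] := bag_edge (@edge_leaf K v Hv).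
  by exists j; rewrite -meets1 H1 H2.
- move=> u Hu; have [j /andP[H1 H2]] := bag_edge (@edge_root K u Hu).
  by exists j; rewrite -meets1 H1 H2.
have big : K < #|nth set0 X j|.
  case/orP: Hj => [H|/andP[H]].
    by apply: leq_trans H _; apply: subset_leq_card; apply: subsetIl.
  rewrite meets1 => NB; apply: leq_ltn_trans H _; apply: card_lt1 NB _.
    exact: subsetIl.
  by rewrite in_setI notNoneSub andbF.
have jX : j < size X.
  case: (ltnP j (size X)) => // /(nth_default set0) E; by rewrite E cards0 in big.
have Hm : #|nth set0 X j| <= \max_(B <- X) #|B|.
  by apply: (@leq_bigmax_seq _ X predT (fun B : {set GV K} => #|B|)) => //; exact: mem_nth.
rewrite /pd_width; have := leq_trans big Hm; case: (\max_(B <- X) #|B|) => // n.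
by rewrite subn1.
Qed.
End Main.

Theorem lemma3p5 (k : nat) : 1 <= k -> pw_ge (Gstar_edges k) k.
Proof. move=> k1 X HX; exact: final HX k1. Qed.
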